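(* Let $f:\Sigma\to O$ be a social choice function. (i) If $f$ is pseudomonotone, then for every $\varepsilon>0$ there is a lex-truthful randomized mechanism that $\varepsilon$-implements $f$. (ii) Conversely, if for some $\varepsilon<\frac12$ there is a lex-truthful randomized mechanism that $\varepsilon$-implements $f$, then $f$ is pseudomonotone.
   Context: Setting: a set $N$ of $n$ agents, a finite set $O$ of $m$ outcomes, and for each agent $j$ a set $\Sigma_j$ of allowed strict total orders on $O$; $\Sigma=\prod_j\Sigma_j$. For a strict order $\succ$, $\succ(\ell)$ is its $\ell$-th ranked outcome and $\mathrm{pos}_\succ(o)$ the position of $o$; $a\succeq b$ means $a\succ b$ or $a=b$. A social choice function is a map $f:\Sigma\to O$. $f$ is pseudomonotone if for every agent $j$, every $\succ_{-j}$, and all $\succ_j,\succ'_j\in\Sigma_j$, setting $o=f(\succ_j,\succ_{-j})$ and $o'=f(\succ'_j,\succ_{-j})$, either $o\succeq_j o'$, or there is an outcome $o''$ with $o''\succ_j o'$ and $\mathrm{pos}_{\succ_j}(o'')<\mathrm{pos}_{\succ'_j}(o'')$. A randomized mechanism maps profiles to probability distributions over $O$; it $\varepsilon$-implements $f$ if $\Pr[\mathcal{M}(\succ)=f(\succ)]\ge1-\varepsilon$ for all $\succ\in\Sigma$. For lotteries $p\ne q$, $p$ lexicographically dominates $q$ w.r.t. $\succ$ if there is $i$ with $p(\succ(i))>q(\succ(i))$ and $p(\succ(\ell))=q(\succ(\ell))$ for all $\ell<i$. $\mathcal{M}$ is lex-truthful if for all $j$, $\succ_j,\succ'_j\in\Sigma_j$,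 $\succ_{-j}$: either $\mathcal{M}(\succ_j,\succ_{-j})=\mathcal{M}(\succ'_j,\succ_{-j})$ (as distributions) or $\mathcal{M}(\succ_j,\succ_{-j})$ lexicographically dominates $\mathcal{M}(\succ'_j,\succ_{-j})$ w.r.t. $\succ_j$. *)

(* Defs.v *)
From HB Require Import structures.
From mathcomp Require Import all_boot all_order all_algebra all_fingroup.
From mathcomp Require Import reals.
Set Implicit Arguments. Unset Strict Implicit. Unset Printing Implicit Defensive.
Import Order.TTheory GRing.Theory Num.Theory.
Local Open Scope ring_scope.

(* Conventions.
   - Agents N = 'I_n, outcomes O = 'I_m.
   - A strict total order on O is encoded by a permutation s : {perm 'I_m}
     giving the (0-based) position of each outcome: pos_s(o) = s o.
     Thus a \succ_s b  iff  s a < s b, and the l-th ranked outcome is s^-1 l.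
   - A profile is a finite function from agents to orders; the domain Sigma is
     the set of profiles P with P j \in S j for every agent j.
   - A social choice function / mechanism is a total function on all profiles;
     only its values on Sigma matter (all conditions quantify over Sigma). *)

Definition order_ (m : nat) := {perm 'I_m}.
Definition profile (n m : nat) := {ffun 'I_n -> {perm 'I_m}}.

Definition ranked m (s : {perm 'I_m}) (l : 'I_m) : 'I_m := (s^-1)%g l.
Definition pos m (s : {perm 'I_m}) (o : 'I_m) : nat := s o.
Definition succ m (s : {perm 'I_m}) (o1 o2 : 'I_m) : bool := (pos s o1 < pos s o2)%N.
Definition succeq m (s : {perm 'I_m}) (o1 o2 : 'I_m) : bool := succ s o1 o2 || (o1 == o2).

Definition upd n m (P : profile n m) (j : 'I_n) (s : {perm 'I_m}) : profile n m :=
  [ffun k => if k == j then s else P k].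

Definition in_Sigma n m (S : 'I_n -> {set {perm 'I_m}}) (P : profile n m) : Prop :=
  forall j, P j \in S j.

Definition in_Sigma_minus n m (S : 'I_n -> {set {perm 'I_m}}) (j : 'I_n)
  (P : profile n m) : Prop :=
  forall k, k != j -> P k \in S k.

Definition pseudomonotone n m (S : 'I_n -> {set {perm 'I_m}})
  (f : profile n m -> 'I_m) : Prop :=
  forall (j : 'I_n) (P : profile n m) (s s' : {perm 'I_m}),
    in_Sigma_minus S j P -> s \in S j -> s' \in S j ->
    let o := f (upd P j s) in
    let o' := f (upd P j s') in
    succeq s o o' \/
    exists o'' : 'I_m, succ s o'' o' /\ (pos s o'' < pos s' o'')%N.

Definition lottery (R : realType) m := 'I_m -> R.
Definition is_distr (R : realType) m (p : 'I_m -> R) : Prop :=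
  (forall o, 0 <= p o) /\ \sum_(o < m) p o = 1.

Definition lex_dom (R : realType) m (s : {perm 'I_m}) (p q : 'I_m -> R) : Prop :=
  p <> q /\
  exists i : 'I_m, q (ranked s i) < p (ranked s i) /\
    forall l : 'I_m, (l < i)%N -> p (ranked s l) = q (ranked s l).

Definition is_mechanism (R : realType) n m (S : 'I_n -> {set {perm 'I_m}})
  (M : profile n m -> 'I_m -> R) : Prop :=
  forall P, in_Sigma S P -> is_distr (M P).

Definition eps_implements (R : realType) n m (S : 'I_n -> {set {perm 'I_m}})
  (M : profile n m -> 'I_m -> R) (f : profile n m -> 'I_m) (eps : R) : Prop :=
  forall P, in_Sigma S P -> 1 - eps <= M P (f P).

Definition lex_truthful (R : realType) n m (S : 'I_n -> {set {perm 'I_m}})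
  (M : profile n m -> 'I_m -> R) : Prop :=
  forall (j : 'I_n) (s s' : {perm 'I_m}) (P : profile n m),
    s \in S j -> s' \in S j -> in_Sigma_minus S j P ->
    M (upd P j s) = M (upd P j s') \/ lex_dom s (M (upd P j s)) (M (upd P j s')).

(* Main.v *)
Require Import Defs.
From mathcomp Require Import all_boot all_order all_algebra all_fingroup.
From mathcomp Require Import reals.
From mathcomp Require Import ring lra.
Import Order.TTheory GRing.Theory Num.Theory.
Local Open Scope ring_scope.

Set Implicit Arguments. Unset Strict Implicit.
Section Aux.
Variable R : realType.

Lemma distr_two m (p : 'I_m -> R) (o o' : 'I_m) :
  is_distr p -> o != o' -> p o + p o' <= 1.
Proof.
move=> [H0 H1] Ne; rewrite -H1 (bigD1 o) //= (bigD1 o') /=; last by rewrite eq_sym.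
rewrite addrA lerDl; apply: sumr_ge0 => i _; exact: H0.
Qed.

Lemma agree_top m (s s' : {perm 'I_m}) (o' : 'I_m) :
  (forall x, ~~ (succ s x o' && (pos s x < pos s' x)%N)) ->
  forall x, (s x < s o')%N -> s' x = s x.
Proof.
move=> Hno.
suff H : forall t x, (s x : nat) = t -> (s x < s o')%N -> s' x = s x.
  by move=> x; apply: H.
elim/ltn_ind => t IH x Ht Hlt.
have Hle : (s' x <= s x)%N.
  by move: (Hno x); rewrite /succ /pos Hlt /= -leqNgt.
case: (ltngtP (s' x) (s x)) Hle => // Hlt2 _.
- pose y := (s^-1)%g (s' x).
  have Hy : s y = s' x by rewrite /y permKV.
  have Hy2 : s' y = s y.
    apply: (IH (s y)); [by rewrite Hy -Ht | by [] | by rewrite Hy (ltn_trans Hlt2)].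
  have : y = x by apply: (@perm_inj _ s'); rewrite Hy2 Hy.
  by move=> E; move: Hlt2; rewrite -Hy E ltnn.
- by apply: val_inj.
Qed.

Lemma part2 n m (S : 'I_n -> {set {perm 'I_m}}) (f : profile n m -> 'I_m) :
  (exists (eps : R) (M : profile n m -> 'I_m -> R),
      eps < 1 / 2 /\ is_mechanism S M /\ lex_truthful S M /\ eps_implements S M f eps)
   -> pseudomonotone S f.
Proof.
move=> [eps [M [He [HM [HT HI]]]]] j P s s' HP Hs Hs' /=.
have inS : forall t, t \in S j -> in_Sigma S (upd P j t).
  move=> t Ht k; rewrite /upd ffunE; case: eqP => [->|/eqP] //; exact: HP.
case: (eqVneq (f (upd P j s)) (f (upd P j s'))) => [E|Ne].
  by left; rewrite /succeq E eqxx orbT.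
right.
case: (boolP [exists o'', succ s o'' (f (upd P j s')) && (pos s o'' < pos s' o'')%N]).
  by move=> /existsP [x /andP [H1 H2]]; exists x.
move=> /existsPn Hno; exfalso.
move: Ne Hno.
set o := f (upd P j s); set o' := f (upd P j s') => Ne Hno.
set p := M (upd P j s); set q := M (upd P j s').
have Hpo : 1 - eps <= p o := HI _ (inS _ Hs).
have Hqo' : 1 - eps <= q o' := HI _ (inS _ Hs').
have Hp2 : p o + p o' <= 1 by apply: distr_two Ne; apply: HM; apply: inS.
have lt1 : p o' < q o'.
  move: Hp2 Hpo Hqo' He; rewrite -/p; clear; lra.
have ag := agree_top Hno.
have agr : forall l : 'I_m, (l < s o')%N -> ranked s l = ranked s' l.
  move=> l Hl; rewrite /ranked.
  have E : s' ((s^-1)%g l) = s ((s^-1)%g l) by apply: ag; rewrite permKV.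
  by rewrite permKV in E; rewrite -[in RHS]E permK.
have Ro' : ranked s (s o') = o' by rewrite /ranked permK.
case: (HT j s s' P Hs Hs' HP) => [Epq|[_ [i [Hi1 Hi2]]]].
  by move: lt1; rewrite /p /q Epq ltxx.
case: (HT j s' s P Hs' Hs HP) => [Epq|[_ [i' [Hi'1 Hi'2]]]].
  by move: lt1; rewrite /p /q Epq ltxx.
rewrite -/p -/q in Hi1 Hi2 Hi'1 Hi'2.
have Hik : (i < s o')%N.
  case: (ltnP (s o') i) => [lt|le].
    by move: (Hi2 _ lt); rewrite Ro' => E; move: lt1; rewrite E ltxx.
  rewrite ltn_neqAle le andbT; apply/negP => /eqP Ei.
  have : i = s o' by apply: val_inj.
  by move=> E; move: Hi1; rewrite E Ro'; lra.
case: (ltngtP i i') => Hii.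
- move: (Hi'2 _ Hii); rewrite -agr //; lra.
- move: (Hi2 _ Hii); rewrite agr ?(ltn_trans Hii) //; lra.
- have E : i = i' by apply: val_inj.
  move: Hi'1; rewrite -E -agr //; lra.
Qed.


Definition wsum n m (P : profile n m) (c : 'I_m) : R :=
  \sum_(k < n) (m%:R - (P k c : nat)%:R).

Definition mech n m (f : profile n m -> 'I_m) (A d : R) (P : profile n m)
  (c : 'I_m) : R := (if c == f P then A else 0) + d * wsum P c.

Lemma wsum_diff n m (P : profile n m) j (s s' : {perm 'I_m}) c :
  wsum (upd P j s) c - wsum (upd P j s') c = (s' c : nat)%:R - (s c : nat)%:R.
Proof.
rewrite /wsum (bigD1 j) //= [X in _ - X](bigD1 j) //= !ffunE eqxx.
have -> : \sum_(i < n | i != j) (m%:R - ((upd P j s i) c : nat)%:R) =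
          \sum_(i < n | i != j) (m%:R - ((upd P j s' i) c : nat)%:R) :> R.
  by apply: eq_bigr => i Hi; rewrite !ffunE (negbTE Hi).
lra.
Qed.

Lemma wsum_total n m (P : profile n m) :
  \sum_c wsum P c = n%:R * \sum_(c < m) (m%:R - (c : nat)%:R).
Proof.
rewrite /wsum exchange_big /=.
rewrite (eq_bigr (fun _ => \sum_(c < m) (m%:R - (c : nat)%:R))); last first.
  move=> k _; rewrite [RHS](reindex_inj (@perm_inj _ (P k))) //.
by rewrite sumr_const card_ord mulr_natl.
Qed.

Lemma K_ge0 m : 0 <= \sum_(c < m) (m%:R - (c : nat)%:R) :> R.
Proof.
apply: sumr_ge0 => c _; rewrite subr_ge0 ler_nat; exact: ltnW.
Qed.

Lemma wsum_ge0 n m (P : profile n m) c : 0 <= wsum P c.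
Proof.
apply: sumr_ge0 => k _; rewrite subr_ge0 ler_nat; exact: ltnW.
Qed.


Lemma first_diff m (s s' : {perm 'I_m}) : s != s' ->
  exists t0 : 'I_m, (forall l : 'I_m, (l < t0)%N -> ranked s l = ranked s' l)
     /\ ranked s t0 != ranked s' t0.
Proof.
move=> Ne.
have [t Ht] : exists t, ranked s t != ranked s' t.
  case: (boolP [exists t, ranked s t != ranked s' t]) => [/existsP //|/existsPn H].
  exfalso; move/negP: Ne; apply; apply/eqP.
  have E : (s^-1 = s'^-1)%g by apply/permP => t; move/negPn/eqP: (H t).
  by rewrite -(invgK s) E invgK.
case: (arg_minnP (P := fun t => ranked s t != ranked s' t) (fun t : 'I_m => (t : nat)) Ht).
move=> t0 H0 Hmin; exists t0; split => // l Hl.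
by apply/eqP; apply: contraTT Hl => Hn; rewrite -leqNgt; apply: Hmin.
Qed.

Lemma lex_wit m (s : {perm 'I_m}) (p q : 'I_m -> R) (i : 'I_m) :
  0 < p (ranked s i) - q (ranked s i) ->
  (forall l : 'I_m, (l < i)%N -> p (ranked s l) - q (ranked s l) = 0) ->
  lex_dom s p q.
Proof.
move=> H1 H2; split.
  by move=> E; move: H1; rewrite E subrr ltxx.
exists i; split; first by rewrite -subr_gt0.
by move=> l Hl; apply/eqP; rewrite -subr_eq0; apply/eqP; apply: H2.
Qed.


Lemma mech_lex n m (S : 'I_n -> {set {perm 'I_m}}) (f : profile n m -> 'I_m) (A d : R) :
  pseudomonotone S f -> 0 < d -> d * m%:R < A -> lex_truthful S (mech f A d).
Proof.
move=> Hpm Hd HA j s s' P Hs Hs' HP.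
case: (eqVneq s s') => [->|Ne]; first by left.
right.
set o := f (upd P j s); set o' := f (upd P j s').
have HA0 : 0 <= A.
  apply: le_trans (ltW HA); apply: mulr_ge0; [exact: ltW | exact: ler0n].
have Dform : forall c, mech f A d (upd P j s) c - mech f A d (upd P j s') c =
   (if c == o then A else 0) - (if c == o' then A else 0)
   + d * ((s' c : nat)%:R - (s c : nat)%:R).
  move=> c; rewrite -(wsum_diff P j s s' c) /mech -/o -/o'; ring.
have [t0 [Hag Hd0]] := first_diff Ne.
have agl : forall l : 'I_m, (l < t0)%N -> s' (ranked s l) = l /\ s (ranked s l) = l.
  move=> l Hl; have E := Hag l Hl; rewrite /ranked in E *; split; [by rewrite E permKV | by rewrite permKV].
set c0 := ranked s t0.
have sc0 : s c0 = t0 by rewrite /c0 /ranked permKV.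
have s'c0 : (t0 < s' c0)%N.
  case: (ltngtP t0 (s' c0)) => // H.
  - exfalso; have E := Hag (s' c0) H.
    rewrite {2}/ranked /c0 /ranked permK in E.
    have E2 : s ((s^-1)%g t0) = s' ((s^-1)%g t0) by rewrite -{1}E permKV.
    by move: H; rewrite /c0 /ranked -E2 permKV ltnn.
  - exfalso; have E : s' c0 = t0 by apply: val_inj.
    have E2 : ranked s' t0 = c0 by rewrite /ranked -E permK.
    by move: Hd0; rewrite E2 /c0 eqxx.
have nepos : forall (l : 'I_m) (c : 'I_m), (l : nat) != s c -> ranked s l != c.
  move=> l c; apply: contra => /eqP <-; by rewrite /ranked permKV.
have Dzero : forall l : 'I_m, (l < t0)%N -> ranked s l != o -> ranked s l != o' ->
    mech f A d (upd P j s) (ranked s l) - mech f A d (upd P j s') (ranked s l) = 0.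
  move=> l Hl H1 H2; rewrite Dform (negbTE H1) (negbTE H2).
  by have [-> ->] := agl l Hl; rewrite !subrr mulr0 addr0.
have Dpos0 : c0 != o' ->
    0 < mech f A d (upd P j s) c0 - mech f A d (upd P j s') c0.
  move=> H; rewrite Dform (negbTE H) subr0.
  have Hx : 0 < d * ((s' c0 : nat)%:R - (s c0 : nat)%:R).
    by apply: mulr_gt0 => //; rewrite subr_gt0 ltr_nat sc0.
  case: ifP => _; lra.
case: (eqVneq o o') => [Eoo|Noo].
  apply: (lex_wit (i := t0)).
    rewrite Dform -Eoo subrr add0r; apply: mulr_gt0 => //.
    by rewrite subr_gt0 ltr_nat -/c0 sc0.
  move=> l Hl; rewrite Dform -Eoo subrr add0r.
  by have [-> ->] := agl l Hl; rewrite subrr mulr0.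
case: (ltnP (s o) (s o')) => Hoo.
  case: (ltnP t0 (s o)) => Ht.
    apply: (lex_wit (i := t0)).
      apply: Dpos0; apply: nepos; rewrite neq_ltn (ltn_trans Ht Hoo) //.
    move=> l Hl; apply: Dzero => //; apply: nepos; rewrite neq_ltn.
      by rewrite (ltn_trans Hl Ht).
    by rewrite (ltn_trans Hl (ltn_trans Ht Hoo)).
  apply: (lex_wit (i := s o)).
    have -> : ranked s (s o) = o by rewrite /ranked permK.
    rewrite Dform eqxx (negbTE Noo) subr0.
    have h1 : 0 <= (s' o : nat)%:R :> R by exact: ler0n.
    have h2 : (s o : nat)%:R <= m%:R :> R by rewrite ler_nat ltnW.
    nra.
  move=> l Hl; apply: Dzero; first exact: leq_trans Hl Ht.
    by apply: nepos; rewrite neq_ltn Hl.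
  by apply: nepos; rewrite neq_ltn (ltn_trans Hl Hoo).
have Hlt : (s o' < s o)%N.
  rewrite ltn_neqAle Hoo andbT; apply/eqP => E.
  by move/eqP: Noo; apply; apply: (@perm_inj _ s); apply: val_inj.
have := Hpm j P s s' HP Hs Hs'; rewrite /= -/o -/o'; case => [|[o'' [H1 H2]]].
  by rewrite /succeq /succ /pos (negbTE Noo) orbF ltnNge Hoo.
have t0le : (t0 <= s o'')%N.
  rewrite leqNgt; apply/negP => H.
  have E := Hag (s o'') H; rewrite {1}/ranked permK in E.
  have E2 : s' o'' = s o'' by rewrite {1}E /ranked permKV.
  by move: H2; rewrite /pos E2 ltnn.
rewrite /succ /pos in H1.
apply: (lex_wit (i := t0)).
  by apply: Dpos0; apply: nepos; rewrite neq_ltn (leq_ltn_trans t0le H1).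
move=> l Hl; apply: Dzero => //; apply: nepos; rewrite neq_ltn.
  by rewrite (ltn_trans Hl (leq_ltn_trans t0le (ltn_trans H1 Hlt))).
by rewrite (ltn_trans Hl (leq_ltn_trans t0le H1)).
Qed.


Lemma part1 n m (S : 'I_n -> {set {perm 'I_m}}) (f : profile n m -> 'I_m) :
  pseudomonotone S f ->
     forall eps : R, 0 < eps ->
       exists M : profile n m -> 'I_m -> R,
         is_mechanism S M /\ lex_truthful S M /\ eps_implements S M f eps.
Proof.
move=> Hpm eps He.
pose K : R := \sum_(c < m) (m%:R - (c : nat)%:R).
pose X : R := n%:R * K.
pose D : R := 1 + X + m%:R.
have HK : 0 <= K := K_ge0 m.
have HX : 0 <= X by apply: mulr_ge0 => //; exact: ler0n.
have Hm : 0 <= m%:R :> R by exact: ler0n.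
have HD : 0 < D by rewrite /D; lra.
pose e : R := if eps <= 1 then eps else 1.
have He0 : 0 < e by rewrite /e; case: ifP.
have He1 : e <= 1 by rewrite /e; case: ifP => // /negbT; rewrite -ltNge => /ltW.
have He2 : e <= eps by rewrite /e; case: ifP => // /negbT; rewrite -ltNge => /ltW.
pose d := e / D.
have Hd : 0 < d by rewrite /d divr_gt0.
have HdD : d + d * X + d * m%:R = e.
  have : d * D = e by rewrite /d divfK // gt_eqF.
  by rewrite /D => <-; ring.
have HdX : 0 <= d * X by apply: mulr_ge0 => //; exact: ltW.
have Hdm : 0 <= d * m%:R by apply: mulr_ge0 => //; exact: ltW.
pose A := 1 - d * X.
exists (mech f A d); split; [|split].
- move=> P _; split.
    move=> c; rewrite /mech; apply: addr_ge0.
      by case: ifP => _ //; rewrite /A; lra.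
    by apply: mulr_ge0; [exact: ltW | exact: wsum_ge0].
  rewrite /mech big_split /= -mulr_sumr wsum_total -/K -/X.
  rewrite (bigD1 (f P)) //= eqxx big1 => [|c /negbTE -> //].
  rewrite /A; ring.
- apply: mech_lex => //; rewrite /A; lra.
- move=> P _; rewrite /mech eqxx.
  have := wsum_ge0 P (f P) => Hw.
  have : 0 <= d * wsum P (f P) by apply: mulr_ge0 => //; exact: ltW.
  rewrite /A; lra.
Qed.

End Aux.
Unset Implicit Arguments. Set Strict Implicit.

Theorem theorem4 (R : realType) (n m : nat) (S : 'I_n -> {set {perm 'I_m}})
  (f : profile n m -> 'I_m) :
  (pseudomonotone S f ->
     forall eps : R, 0 < eps ->
       exists M : profile n m -> 'I_m -> R,
         is_mechanism S M /\ lex_truthful S M /\ eps_implements S M f eps)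
  /\
  ((exists (eps : R) (M : profile n m -> 'I_m -> R),
      eps < 1 / 2 /\ is_mechanism S M /\ lex_truthful S M /\ eps_implements S M f eps)
   -> pseudomonotone S f).
Proof.
split; [exact: part1 | exact: part2].
Qed.
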